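(* Let $R$ be a Noetherian ring and let $\mathcal P_0:=\{I\in\mathcal I^\bullet(R)\mid \dim(R/I)=0\}$. Then: (1) $\mathcal P_0$ is dense in $\mathcal I^\bullet(R)$ with respect to the constructible topology; (2) if all residue fields of $R$ are finite, then $\mathcal P_0$ is the smallest dense subset of $\mathcal I^\bullet(R)$ with respect to the constructible topology.
   Context: $\mathcal I(R)$ is the set of ideals of $R$ and $\mathcal I^\bullet(R)$ the set of proper ideals. $\mathcal I(R)$ carries the Zariski topology with basis of open sets $\mathcal B(x_1,\ldots,x_n):=\{I\in\mathcal I(R)\mid x_1,\ldots,x_n\in I\}$; it is a spectral space. The constructible topology is the coarsest topology in which all open quasi-compact subsets of $\mathcal I(R)$ are clopen; $\mathcal I^\bullet(R)$ carries the subspace topology of the constructible topology. *)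

(* Defs.v *)
From HB Require Import structures.
From mathcomp Require Import all_boot all_algebra.
From mathcomp Require Import boolp classical_sets.
From Stdlib Require List.
Import GRing.Theory.

Set Implicit Arguments.
Unset Strict Implicit.
Unset Printing Implicit Defensive.

Local Open Scope ring_scope.
Local Open Scope classical_set_scope.

Section IdealSpace.
Variable R : comPzRingType.

Definition is_ideal (I : set R) : Prop :=
  [/\ I 0, (forall x y, I x -> I y -> I (x + y)) & (forall r x, I x -> I (r * x))].

Definition ideals : set (set R) := [set I | is_ideal I].
Definition proper_ideals : set (set R) := [set I | is_ideal I /\ ~ I 1].

Definition is_prime (P : set R) : Prop :=
  [/\ is_ideal P, ~ P 1 & (forall x y, P (x * y) -> P x \/ P y)].

Definition is_maximal (M : set R) : Prop :=
  [/\ is_ideal M, ~ M 1 &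
      (forall J, is_ideal J -> M `<=` J -> ~ J 1 -> J = M)].

Definition noetherian : Prop :=
  forall f : nat -> set R, (forall n, is_ideal (f n)) ->
    (forall n, f n `<=` f n.+1) ->
    exists N, forall n, (N <= n)%N -> f n = f N.

(** A chain P_0 ⊊ P_1 ⊊ ... ⊊ P_n of primes of R containing I
    (= a chain of primes of length n in R/I, by the correspondence theorem). *)
Definition prime_chain_above (I : set R) (n : nat) (c : nat -> set R) : Prop :=
  [/\ forall i, (i <= n)%N -> is_prime (c i),
      I `<=` c 0%N &
      forall i, (i < n)%N -> c i `<=` c i.+1 /\ c i <> c i.+1].

(** dim(R/I) = 0: the supremum of lengths of prime chains of R/I is 0. *)
Definition dim_quot_eq0 (I : set R) : Prop :=
  (exists c, prime_chain_above I 0 c) /\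
  (forall n c, prime_chain_above I n c -> n = 0%N).

Definition P0 : set (set R) := [set I | proper_ideals I /\ dim_quot_eq0 I].

(** R/M is finite (M maximal: this is the residue field at M). *)
Definition finite_quotient (M : set R) : Prop :=
  exists s : seq R, forall x, exists2 y, y \in s & M (x - y).

Definition residue_fields_finite : Prop :=
  forall M, is_maximal M -> finite_quotient M.

(** Zariski topology on I(R): basis B(x_1,...,x_n). *)
Definition zbasic (xs : seq R) : set (set R) :=
  [set I | ideals I /\ forall x, x \in xs -> I x].

Definition zopen (U : set (set R)) : Prop :=
  U `<=` ideals /\
  forall I, U I -> exists xs, zbasic xs I /\ zbasic xs `<=` U.

Definition zquasi_compact (U : set (set R)) : Prop :=
  U `<=` ideals /\
  forall C : set (set (set R)), (forall V, C V -> zopen V) ->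
    U `<=` \bigcup_(V in C) V ->
    exists s : seq (set (set R)),
      (forall V, List.In V s -> C V) /\
      U `<=` [set I | exists2 V, List.In V s & V I].

Definition cons_subbasic (V : set (set R)) : Prop :=
  exists U, [/\ zopen U, zquasi_compact U & (V = U \/ V = ideals `\` U)].

(** Open sets of the topology on I(R) generated by that subbasis, i.e. the
    coarsest topology in which all open quasi-compact sets are clopen. *)
Definition cons_open (O : set (set R)) : Prop :=
  O `<=` ideals /\
  forall I, O I -> exists s : seq (set (set R)),
    [/\ (forall V, List.In V s -> cons_subbasic V),
        (forall V, List.In V s -> V I) &
        ideals `&` [set J | forall V, List.In V s -> V J] `<=` O].

Definition cons_dense_in (Y D : set (set R)) : Prop :=
  D `<=` Y /\
  forall O, cons_open O -> O `&` Y !=set0 -> O `&` D !=set0.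

End IdealSpace.

Arguments ideals R : clear implicits.
Arguments proper_ideals R : clear implicits.
Arguments P0 R : clear implicits.
Arguments noetherian R : clear implicits.
Arguments residue_fields_finite R : clear implicits.

(* Main.v *)
Require Import Defs.
From mathcomp Require Import all_boot all_algebra.
From mathcomp Require Import boolp classical_sets.
From Stdlib Require List.
Local Open Scope classical_set_scope.

Set Implicit Arguments.
Unset Strict Implicit.
Import GRing.Theory.
Local Open Scope ring_scope.

Section Helpers.
Variable R : comPzRingType.
Implicit Types (I J K L M P : set R) (x y a b r : R) (U : set (set R)) (zs ys xs : seq R).

Lemma id0 I : is_ideal I -> I 0. Proof. by case. Qed.
Lemma idD I x y : is_ideal I -> I x -> I y -> I (x + y). Proof. by case=> _ H _; apply: H. Qed.
Lemma idM I r x : is_ideal I -> I x -> I (r * x). Proof. by case=> _ _ H; apply: H. Qed.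
Lemma idMr I r x : is_ideal I -> I x -> I (x * r). Proof. by move=> H Hx; rewrite mulrC; apply: idM. Qed.
Lemma idN I x : is_ideal I -> I x -> I (- x).
Proof. by move=> H Hx; rewrite -mulN1r; apply: idM. Qed.
Lemma idB I x y : is_ideal I -> I x -> I y -> I (x - y).
Proof. by move=> H Hx Hy; apply: idD => //; apply: idN. Qed.
Lemma idBr I x y : is_ideal I -> I (x + y) -> I x -> I y.
Proof. by move=> H Hxy Hx; have := idB H Hxy Hx; rewrite addrC addKr. Qed.

Definition gen (ys : seq R) : set R :=
  [set z | forall L, is_ideal L -> (forall y, y \in ys -> L y) -> L z].
Definition annJ J a : set R := [set r | J (r * a)].
Definition addI J a : set R := [set z | exists j r, J j /\ z = j + r * a].

Lemma gen_ideal ys : is_ideal (gen ys).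
Proof.
split.
- by move=> L HL _; apply: id0.
- by move=> x y Hx Hy L HL Hys; apply: idD => //; [apply: Hx | apply: Hy].
- by move=> r x Hx L HL Hys; apply: idM => //; apply: Hx.
Qed.
Lemma gen_mem ys y : y \in ys -> gen ys y.
Proof. by move=> Hy L _ H; apply: H. Qed.
Lemma gen_sub ys L : is_ideal L -> (forall y, y \in ys -> L y) -> gen ys `<=` L.
Proof. by move=> HL H z Hz; apply: Hz. Qed.

Lemma annJ_ideal J a : is_ideal J -> is_ideal (annJ J a).
Proof.
move=> HJ; split; rewrite /annJ /=.
- by rewrite mul0r; apply: id0.
- by move=> x y Hx Hy; rewrite mulrDl; apply: idD.
- by move=> r x Hx; rewrite -mulrA; apply: idM.
Qed.
Lemma annJ_sup J a : is_ideal J -> J `<=` annJ J a.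
Proof. by move=> HJ x Hx; rewrite /annJ /=; apply: idMr. Qed.

Lemma addI_ideal J a : is_ideal J -> is_ideal (addI J a).
Proof.
move=> HJ; split; rewrite /addI /=.
- by exists 0, 0; split; [apply: id0 | rewrite mul0r addr0].
- move=> x y [j [r [Hj ->]]] [j' [r' [Hj' ->]]]; exists (j + j'), (r + r'); split.
    by apply: idD.
  by rewrite mulrDl addrACA.
- move=> s x [j [r [Hj ->]]]; exists (s * j), (s * r); split; first by apply: idM.
  by rewrite mulrDr mulrA.
Qed.
Lemma addI_sup J a : is_ideal J -> J `<=` addI J a.
Proof. by move=> HJ x Hx; exists x, 0; rewrite mul0r addr0. Qed.
Lemma addI_a J a : is_ideal J -> addI J a a.
Proof. by move=> HJ; exists 0, 1; rewrite mul1r add0r; split => //; apply: id0. Qed.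

Lemma max_prime M : is_maximal M -> is_prime M.
Proof.
case=> HM H1 Hmax; split => // x y Hxy.
case: (EM (M x)) => Hx; first by left.
right.
have HL := addI_ideal x HM.
have Hne : addI M x 1.
  case: (EM (addI M x 1)) => // N1.
  have E := Hmax _ HL (addI_sup x HM) N1.
  by exfalso; apply: Hx; rewrite -E; apply: addI_a.
case: Hne => j [r [Hj E]].
have -> : y = j * y + r * (x * y) by rewrite mulrA -mulrDl -E mul1r.
by apply: idD => //; [apply: idMr | apply: idM].
Qed.


Lemma count_lt (p q : pred R) (s : seq R) : (forall z, p z -> q z) ->
  (exists2 z, z \in s & q z && ~~ p z) -> (count p s < count q s)%N.
Proof.
move=> Hpq; elim: s => [|z s IH] [w]; first by [].
have pq : ((p z : nat) <= q z)%N by case pz: (p z) => //; rewrite (Hpq z pz).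
rewrite in_cons => /orP [/eqP -> | ws] /andP [qw npw] /=.
  by rewrite (negbTE npw) qw add0n add1n ltnS; apply: sub_count.
by rewrite -addnS; apply: leq_add => //; apply: IH; exists w => //; rewrite qw.
Qed.

Lemma maxel (HR : noetherian R) (F : set (set R)) L0 :
  (forall L, F L -> is_ideal L) -> F L0 ->
  exists M, F M /\ forall L, F L -> M `<=` L -> L = M.
Proof.
move=> Fid FL0.
case: (EM (exists M, F M /\ forall L, F L -> M `<=` L -> L = M)) => // N.
have H : forall M, exists L, F M -> F L /\ M `<=` L /\ L <> M.
  move=> M; case: (EM (F M)) => FM; last by exists M.
  have : ~ (forall L, F L -> M `<=` L -> L = M) by move=> H; apply: N; exists M.
  move/existsNP => [L HL]; exists L => _.
  by move/not_implyP: HL => [FL /not_implyP [ML NE]].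
have [g Hg] := choice H.
pose f n := iter n g L0.
have Ff : forall n, F (f n) by elim=> //= n IH; have [] := Hg _ IH.
have [N0 HN] := HR f (fun n => Fid _ (Ff n)) (fun n => proj1 (proj2 (Hg _ (Ff n)))).
have := HN N0.+1 (leqnSn N0); have [_ [_ ne]] := Hg _ (Ff N0); move=> E; exfalso; exact: (ne E).
Qed.

Lemma pow_notin P s n : is_prime P -> ~ P s -> ~ P (s ^+ n).
Proof.
move=> [HP P1 Hp] Ps; elim: n => [|n IH]; first by rewrite expr0.
by rewrite exprS => /Hp [].
Qed.

Section LemA.
Variables (HR : noetherian R) (J : set R) (xs : seq R) (HJ : is_ideal J).
Hypothesis Hxs : forall x, x \in xs -> ~ J x.
Hypothesis Hcov : forall a, ~ J a -> exists2 x, x \in xs & addI J a x.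

Let le x y := addI J y x.
Let le_refl x : le x x. Proof. exact: addI_a. Qed.
Let le_trans x y z : le x y -> le y z -> le x z.
Proof.
move=> [j [r [Hj ->]]] [j' [r' [Hj' ->]]].
exists (j + r * j'), (r * r'); split; first by apply: idD => //; apply: idM.
by rewrite mulrDr addrA mulrA.
Qed.

Definition minimal x := x \in xs /\ forall y, y \in xs -> le y x -> le x y.

Lemma exists_min a : ~ J a -> exists x, minimal x /\ le x a.
Proof.
move=> Ha; have [x0 x0in lx0] := Hcov Ha.
pose c x := count (fun z => `[< le z x >]) xs.
suff: forall n x, (c x <= n)%N -> x \in xs -> le x a -> exists m, minimal m /\ le m a.
  by move/(_ _ x0 (leqnn _) x0in lx0).
elim=> [|n IH] x cx xin lxa.
  have : (0 < c x)%N by rewrite -has_count; apply/hasP; exists x => //; apply/asboolP.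
  by rewrite lt0n -leqn0 cx.
case: (EM (minimal x)) => [mx|nm]; first by exists x.
move: nm => /not_andP [// | /existsNP [y /not_implyP [yin /not_implyP [lyx nlxy]]]].
apply: (IH y) => //; last exact: le_trans lxa.
rewrite -ltnS; apply: leq_trans cx; apply: count_lt.
  by move=> z /asboolP lzy; apply/asboolP; apply: le_trans lyx.
exists x => //; apply/andP; split; first by apply/asboolP.
by apply/asboolP.
Qed.

Lemma Mx_max x : minimal x -> is_maximal (annJ J x).
Proof.
move=> [xin xmin]; split; first exact: annJ_ideal.
  by rewrite /annJ /= mul1r; apply: Hxs.
move=> L HL sub L1; apply/seteqP; split; last by [].
move=> a La; rewrite /annJ /=.
case: (EM (J (a * x))) => // Nax; exfalso.
have [y yin lyax] := Hcov Nax.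
have lax : le (a * x) x by exists 0, a; split; [apply: id0 | rewrite add0r].
have [j [r [Hj E]]] := xmin y yin (le_trans lyax lax).
have [j' [r' [Hj' E']]] := lyax.
have lx : le x (a * x).
  exists (j + r * j'), (r * r'); split; first by apply: idD => //; apply: idM.
  by rewrite {1}E E' mulrDr addrA mulrA.
have [k [u [Hk Ek]]] := lx.
have H1 : annJ J x (1 - u * a).
  rewrite /annJ /= mulrBl mul1r -mulrA.
  have -> : x - u * (a * x) = k by rewrite {1}Ek addrK.
  exact: Hk.
apply: L1; have -> : (1 : R) = (1 - u * a) + u * a by rewrite subrK.
by apply: idD => //; [apply: sub | apply: idM].
Qed.

Lemma prime_above P : is_prime P -> J `<=` P ->
  exists x, minimal x /\ annJ J x `<=` P.
Proof.
move=> HP JP.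
case: (EM (exists x, minimal x /\ annJ J x `<=` P)) => // N.
have Hs : forall l : seq R, exists s, ~ P s /\
    forall x, x \in l -> minimal x -> J (s * x).
  elim => [|z l [s [Ps Hl]]].
    by exists 1; split; [case: HP | ].
  case: (EM (minimal z)) => mz.
    have : ~ annJ J z `<=` P by move=> H; apply: N; exists z.
    move/existsNP => [s0 /not_implyP [Js0 Ps0]].
    exists (s0 * s); split; first by case: HP => _ _ Hp /Hp [].
    move=> x; rewrite in_cons => /orP [/eqP -> _ | xl mx].
      by rewrite mulrAC; apply: idMr.
    by rewrite -mulrA; apply: idM => //; apply: Hl.
  exists s; split => // x; rewrite in_cons => /orP [/eqP -> // | ].
  exact: Hl.
have [s [Ps Hsx]] := Hs xs.
pose f n := annJ J (s ^+ n).
have [N0 HN] := @HR f (fun n => annJ_ideal _ HJ)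
  (fun n r Hr => ltac:(rewrite /f /annJ /= exprSr mulrA; exact: idMr)).
pose t := s ^+ N0.+1.
have Jt : ~ J t by move/JP; apply: pow_notin.
have [m [[min_in min_m] [j [r [Jj E]]]]] := exists_min Jt.
have Jsm := Hsx m min_in (conj min_in min_m).
have Jtm : J (t * m) by rewrite /t exprSr -mulrA; apply: idM.
have Jrt : J (t * (r * t)).
  apply: (idBr HJ _ (idM t HJ Jj)); rewrite -mulrDr -E; exact: Jtm.
have : f (N0.+1 + N0.+1)%N r by rewrite /f /annJ /= exprD; rewrite mulrCA in Jrt; exact: Jrt.
rewrite HN; last by rewrite addSn ltnW // ltnS leq_addr.
rewrite -(HN N0.+1) // /f /annJ /= -/t => Jrt'.
by exfalso; apply: (Hxs min_in); rewrite E; apply: idD.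
Qed.

Lemma dim0_crit : ~ J 1 -> dim_quot_eq0 J.
Proof.
move=> J1; split.
  have [x [mx _]] := exists_min J1.
  exists (fun _ => annJ J x); split => //.
  - by move=> i _; apply: max_prime; apply: Mx_max.
  - exact: annJ_sup.
move=> [//|n] c [Hp Jc Hch]; exfalso.
have [x [mx sub]] := prime_above (Hp 0%N isT) Jc.
have Pmax := Mx_max mx.
have E : annJ J x = c 0%N.
  case: Pmax => _ _ H; apply/esym; apply: H => //; first by case: (Hp 0%N isT).
  by case: (Hp 0%N isT).
have [le01 ne01] := Hch 0%N isT.
apply: ne01; rewrite -E; case: Pmax => _ _ H; apply/esym/H.
- by case: (Hp 1%N isT).
- by rewrite E.
- by case: (Hp 1%N isT).
Qed.

End LemA.

Lemma mem_In (x : R) (s : seq R) : x \in s -> List.In x s.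
Proof.
elim: s => [|y s IH] //; rewrite in_cons => /orP [/eqP -> | xs]; [by left | by right; apply: IH].
Qed.

Lemma zopen_up U I K : zopen U -> U I -> is_ideal K -> I `<=` K -> U K.
Proof.
case=> _ H UI HK IK; have [xs [[_ Hx] sub]] := H _ UI; apply: sub; split.
  exact: HK.
by move=> x /Hx /IK.
Qed.

Lemma zbasic_open zs : zopen (zbasic zs).
Proof. split; first by move=> K [? _]. by move=> K HK; exists zs; split. Qed.

Lemma zbasic_qc zs : zquasi_compact (zbasic zs).
Proof.
split; first by move=> K [? _].
move=> C Copen cover.
have Hg : zbasic zs (gen zs) by split; [exact: gen_ideal | move=> z; apply: gen_mem].
have [W CW Wg] := cover _ Hg.
have [_ HW] := Copen _ CW.
have [ws [[_ Hws] sub]] := HW _ Wg.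
exists [:: W]; split; first by move=> V [<-|[]].
move=> K [HK HKz]; exists W; first by left.
apply: sub; split; first exact: HK.
by move=> w /Hws; apply: gen_sub.
Qed.

Lemma qc_avoid U I : zopen U -> zquasi_compact U -> is_ideal I -> ~ U I ->
  exists ys : seq R, (forall y, y \in ys -> ~ I y) /\
    forall K, is_ideal K -> (forall y, y \in ys -> ~ K y) -> ~ U K.
Proof.
move=> Uo [_ Uqc] HI UI.
pose C := [set W : set (set R) | exists zs, W = zbasic zs /\ zbasic zs `<=` U].
have Copen : forall V, C V -> zopen V by move=> V [zs [-> _]]; exact: zbasic_open.
have Ccov : U `<=` \bigcup_(V in C) V.
  move=> K UK; have [_ H] := Uo; have [zs [Kz sub]] := H _ UK.
  by exists (zbasic zs) => //; exists zs.
have [l [lC lcov]] := Uqc C Copen Ccov.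
suff [ys [H1 H2]] : exists ys, (forall y, y \in ys -> ~ I y) /\
    forall K, is_ideal K -> (forall y, y \in ys -> ~ K y) ->
    forall W, List.In W l -> ~ W K.
  exists ys; split => // K HK Ky UK; have [W Wl WK] := lcov _ UK.
  exact: H2 K HK Ky W Wl WK.
have lI : forall W, List.In W l -> ~ W I.
  by move=> W /lC [zs [-> sub]] /sub.
clear lcov; elim: l lC lI => [|W l IH] lC lI.
  by exists [::]; split => // K _ _ W [].
have [ys [H1 H2]] := IH (fun V h => lC V (or_intror h)) (fun V h => lI V (or_intror h)).
have [zs [EW _]] := lC W (or_introl erefl).
have WI : ~ zbasic zs I by rewrite -EW; apply: lI; left.
have [z [zin Iz]] : exists z, z \in zs /\ ~ I z.
  case: (EM (exists z, z \in zs /\ ~ I z)) => // Nz; exfalso; apply: WI.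
  split; first exact: HI.
  move=> z zin; case: (EM (I z)) => // Iz; exfalso; apply: Nz; exists z.
  by split.
exists (z :: ys); split.
  by move=> y; rewrite in_cons => /orP [/eqP -> | /H1].
move=> K HK Ky V [<-|Vl].
  rewrite EW => -[_ Kz]; apply: (Ky z); first by rewrite mem_head.
  exact: Kz.
by apply: H2 => // y yin; apply: Ky; rewrite in_cons yin orbT.
Qed.

Lemma build_avoid I (HI : is_ideal I) (s : seq (set (set R))) :
  (forall V, List.In V s -> cons_subbasic V) -> (forall V, List.In V s -> V I) ->
  exists xs, (forall x, x \in xs -> ~ I x) /\
    forall K, is_ideal K -> I `<=` K -> (forall x, x \in xs -> ~ K x) ->
      forall V, List.In V s -> V K.
Proof.
elim: s => [|V s IH] Hs HsI.
  by exists [::]; split => // K _ _ _ V [].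
have [xs [H1 H2]] := IH (fun W h => Hs W (or_intror h)) (fun W h => HsI W (or_intror h)).
have VI := HsI V (or_introl erefl).
have [U [Uo Uqc [EV|EV]]] := Hs V (or_introl erefl).
  exists xs; split => // K HK IK Kx W [<-|Ws]; last exact: H2.
  rewrite EV; apply: (zopen_up Uo _ HK IK); rewrite -EV; exact: VI.
have UI : ~ U I by move: VI; rewrite EV => -[].
have [ys [Y1 Y2]] := qc_avoid Uo Uqc HI UI.
exists (ys ++ xs); split.
  by move=> x; rewrite mem_cat => /orP []; [exact: Y1 | exact: H1].
move=> K HK IK Kx W [<-|Ws].
  rewrite EV; split; first exact: HK.
  by apply: Y2 => // y yin; apply: Kx; rewrite mem_cat yin.
by apply: H2 => // x xin; apply: Kx; rewrite mem_cat xin orbT.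
Qed.

Lemma part1 (HR : noetherian R) : cons_dense_in (proper_ideals R) (P0 R).
Proof.
split; first by move=> I [? _].
move=> O [Osub HO] [I [OI [HI I1]]].
have [s [Hs HsI Hsub]] := HO I OI.
have [xs [H1 H2]] := build_avoid HI Hs HsI.
pose F := [set L | is_ideal L /\ I `<=` L /\ forall x, x \in (1 :: xs) -> ~ L x].
have FI : F I.
  split => //; split => // x; rewrite in_cons => /orP [/eqP -> // | ]; exact: H1.
have [J [[HJ [IJ Jx]] Jmax]] := maxel HR (fun L (h : F L) => proj1 h) FI.
have J1 : ~ J 1 by apply: Jx; rewrite mem_head.
exists J; split.
  apply: Hsub; split; first exact: HJ.
  by apply: H2 => // x xin; apply: Jx; rewrite in_cons xin orbT.
split; first by split.
apply: (@dim0_crit HR J (1 :: xs) HJ Jx) => // a Ja.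
case: (EM (exists2 x, x \in 1 :: xs & addI J a x)) => // N; exfalso.
have FL : F (addI J a).
  split; first exact: addI_ideal.
  split; first by move=> z /IJ /(addI_sup a HJ).
  by move=> x xin ax; apply: N; exists x.
have E := Jmax _ FL (addI_sup a HJ).
by apply: Ja; rewrite -E; exact: addI_a.
Qed.

Lemma fg (HR : noetherian R) I : is_ideal I ->
  exists ys, (forall y, y \in ys -> I y) /\ I `<=` gen ys.
Proof.
move=> HI.
pose F := [set L | exists ys, (forall y, y \in ys -> I y) /\ L = gen ys].
have F0 : F (gen [::]) by exists [::].
have Fid : forall L, F L -> is_ideal L by move=> L [ys [_ ->]]; exact: gen_ideal.
have [M [[ys [Hys EM']] Mmax]] := maxel HR Fid F0.
subst M; exists ys; split => // a Ia.
case: (EM (gen ys a)) => // Na; exfalso.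
have FL : F (gen (a :: ys)).
  exists (a :: ys); split => // y; rewrite in_cons => /orP [/eqP -> // | ]; exact: Hys.
have sub : gen ys `<=` gen (a :: ys).
  by move=> z Hz L HL Hy; apply: Hz => // y yin; apply: Hy; rewrite in_cons yin orbT.
have E := Mmax _ FL sub.
by apply: Na; rewrite -E; apply: gen_mem; rewrite mem_head.
Qed.

Lemma dim0_prime_max (HR : noetherian R) I P :
  dim_quot_eq0 I -> is_prime P -> I `<=` P -> is_maximal P.
Proof.
move=> [_ Hd] HP IP; have HP' := HP; case: HP' => HPi P1 _.
split => // L HL PL L1.
case: (EM (L = P)) => // NE; exfalso.
pose F := [set M | is_ideal M /\ L `<=` M /\ ~ M 1].
have FL : F L by split; [exact: HL | split; [move=> z Lz; exact: Lz | exact: L1]].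
have [M [[HM [LM M1]] Mmax]] := maxel HR (fun M (h : F M) => proj1 h) FL.
have Mm : is_maximal M.
  split => // L' HL' ML' L'1; apply: Mmax => //.
  by split => //; split => // z /LM /ML'.
suff : (1 = 0)%N by [].
apply: (Hd 1%N (fun i => if i == 0%N then P else M)); split.
- by case=> [|[|i]] //= _; first [exact: HP | exact: max_prime].
- exact: IP.
- case=> // _ /=; split; first by move=> z /PL /LM.
  move=> EPM; apply: NE; apply/seteqP; split => // z Lz.
  by rewrite EPM; exact: LM.
Qed.

Lemma fin_mono J K : J `<=` K -> finite_quotient J -> finite_quotient K.
Proof.
by move=> JK [s Hs]; exists s => x; have [y ys Jy] := Hs x; exists y => //; exact: JK.
Qed.

Lemma fin_ext J a : is_ideal J -> finite_quotient (addI J a) ->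
  finite_quotient (annJ J a) -> finite_quotient J.
Proof.
move=> HJ [s2 H2] [s1 H1].
exists [seq y2 + y1 * a | y2 <- s2, y1 <- s1] => x.
have [y2 y2in [j [r [Hj E]]]] := H2 x.
have [y1 y1in Hr] := H1 r.
exists (y2 + y1 * a); first exact: allpairs_f.
have -> : x - (y2 + y1 * a) = j + (r - y1) * a.
  by rewrite opprD addrA E mulrBl addrA.
exact: idD.
Qed.

Lemma fin_of_dim0 (HR : noetherian R) (Hres : residue_fields_finite R) I :
  is_ideal I -> dim_quot_eq0 I -> finite_quotient I.
Proof.
move=> HI Hdim.
case: (EM (finite_quotient I)) => // NI.
pose F := [set J | is_ideal J /\ I `<=` J /\ ~ finite_quotient J].
have FI : F I by split; [exact: HI | split; [move=> z Lz; exact: Lz | exact: NI]].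
have [J [[HJ [IJ NJ]] Jmax]] := maxel HR (fun L (h : F L) => proj1 h) FI.
exfalso.
have fin_big : forall L, is_ideal L -> J `<=` L -> L <> J -> finite_quotient L.
  move=> L HL JL NE; case: (EM (finite_quotient L)) => // NL; exfalso.
  by apply: NE; apply: Jmax => //; split => //; split => // z /IJ /JL.
have J1 : ~ J 1.
  move=> J1; apply: NJ; exists [:: 0] => x; exists 0; first by rewrite mem_head.
  by rewrite subr0 -(mulr1 x); apply: idM.
case: (EM (is_prime J)) => Jp.
  by apply: NJ; apply: Hres; apply: (dim0_prime_max HR Hdim Jp IJ).
have [a [b [Jab [Ja Jb]]]] : exists a b, J (a * b) /\ ~ J a /\ ~ J b.
  case: (EM (exists a b, J (a * b) /\ ~ J a /\ ~ J b)) => // N; exfalso.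
  apply: Jp; split => // x y Jxy.
  case: (EM (J x)) => Jx; first by left.
  case: (EM (J y)) => Jy; first by right.
  by exfalso; apply: N; exists x, y.
have Fa : finite_quotient (addI J a).
  apply: fin_big; [exact: addI_ideal | exact: addI_sup | ].
  by move=> E; apply: Ja; rewrite -E; exact: addI_a.
have Fb : finite_quotient (addI J b).
  apply: fin_big; [exact: addI_ideal | exact: addI_sup | ].
  by move=> E; apply: Jb; rewrite -E; exact: addI_a.
have sub : addI J b `<=` annJ J a.
  move=> z [j [r [Hj ->]]]; rewrite /annJ /= mulrDl; apply: idD => //.
    exact: idMr.
  by rewrite -mulrA [b * a]mulrC; apply: idM.
by apply: NJ; apply: (fin_ext HJ Fa (fin_mono sub Fb)).
Qed.

Lemma part2 (HR : noetherian R) (Hres : residue_fields_finite R) D :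
  cons_dense_in (proper_ideals R) D -> P0 R `<=` D.
Proof.
move=> [Dsub HD] I [[HI I1] Hdim].
have [reps Hreps] := fin_of_dim0 HR Hres HI Hdim.
have [gens [Hg Ig]] := fg HR HI.
pose h r := if `[< I r >] then zbasic gens else ideals R `\` zbasic (r :: gens).
pose s := zbasic gens :: map h reps.
pose O := ideals R `&` [set K | forall V, List.In V s -> V K].
have Hgens : cons_subbasic (zbasic gens) /\ zbasic gens I.
  split; first by exists (zbasic gens); split; [exact: zbasic_open | exact: zbasic_qc | left].
  by split; [exact: HI | exact: Hg].
have Hs : forall V, List.In V s -> cons_subbasic V /\ V I.
  move=> V [<-| /List.in_map_iff [r [<- _]]]; first exact: Hgens.
  rewrite /h; case: asboolP => Ir; first exact: Hgens.
  split.
    by exists (zbasic (r :: gens)); split; [exact: zbasic_open | exact: zbasic_qc | right].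
  split; first exact: HI.
  by move=> [_ Hr]; apply: Ir; apply: Hr; rewrite mem_head.
have Oo : cons_open O.
  split; first by move=> K [? _].
  move=> K OK; exists s; split.
  - by move=> V /Hs [].
  - by case: OK.
  - by [].
have OI : (O `&` proper_ideals R) !=set0.
  exists I; split; last by split.
  by split; [exact: HI | move=> V /Hs []].
have [K [[HK HKs] DK]] := HD O Oo OI.
have [_ Kg] := HKs _ (or_introl erefl).
have IK : I `<=` K by move=> z /Ig; apply: gen_sub.
have KI : K `<=` I.
  move=> a Ka; case: (EM (I a)) => // Ia; exfalso.
  have [r rin Iar] := Hreps a.
  have Ir : ~ I r.
    by move=> Ir; apply: Ia; have := idD HI Iar Ir; rewrite subrK.
  have := HKs (h r) (or_intror (List.in_map h reps r (mem_In rin))).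
  rewrite /h asboolF // => -[_]; apply; split; first exact: HK.
  move=> z; rewrite in_cons => /orP [/eqP -> | zg]; last exact: Kg.
  by have := idB HK Ka (IK _ Iar); rewrite opprB addrC subrK.
have -> : I = K by apply/seteqP; split.
exact: DK.
Qed.

End Helpers.

Theorem proposition5p5 (R : comPzRingType) (HR : noetherian R) :
  cons_dense_in (proper_ideals R) (P0 R) /\
  (residue_fields_finite R ->
     cons_dense_in (proper_ideals R) (P0 R) /\
     forall D : set (set R),
       cons_dense_in (proper_ideals R) D -> P0 R `<=` D).
Proof.
split; first exact: part1 HR.
by move=> Hres; split; [exact: part1 HR | move=> D; exact: part2 HR Hres D].
Qed.
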